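(* Let $b\ge0$ be an integer, $W\in\mathrm U(n)$ with columns $|w_1\rangle,\dots,|w_n\rangle$, and let $\sigma^{(2)}$ be the fourth-order moment matrix of $\mathcal U_W|b^n\rangle$. Then $$\sigma^{(2)}=(b+1)^2\big(I\otimes I+\mathrm{SWAP}\big)-b(b+1)\sum_{i=1}^n\big(|w_i\rangle\otimes|w_i\rangle\big)\big(\langle w_i|\otimes\langle w_i|\big),$$ where $\mathrm{SWAP}$ is the operator on $\mathbb C^n\otimes\mathbb C^n$ with $\mathrm{SWAP}(|u\rangle\otimes|v\rangle)=|v\rangle\otimes|u\rangle$. Consequently, for $b\ge1$, $A:=\frac{1}{b(b+1)}\big((b+1)^2(I\otimes I+\mathrm{SWAP})-\sigma^{(2)}\big)$ is the orthogonal projector $\sum_i (|w_i\rangle\otimes|w_i\rangle)(\langle w_i|\otimes\langle w_i|)$ of rank $n$.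
   Context: Consider $n$ bosonic modes with annihilation operators $a_1,\dots,a_n$ on the Fock space, $[a_i,a_j^\dagger]=\delta_{ij}$, $[a_i,a_j]=0$. $|b^n\rangle=|b,\dots,b\rangle$ is the Fock state with $b$ bosons in each mode. For $W\in\mathrm U(n)$, $\mathcal U_W$ denotes the passive Gaussian unitary with $\mathcal U_W|0\rangle=|0\rangle$ and $\mathcal U_W^\dagger a_i\mathcal U_W=\sum_j W_{ij}a_j$. For a state $|\psi\rangle$, $\sigma^{(2)}$ is the $n^2\times n^2$ matrix with rows indexed by $(i,j)$ and columns by $(k,l)$, $\sigma^{(2)}_{ij;kl}=\langle\psi|a_ia_ja_k^\dagger a_l^\dagger|\psi\rangle$, viewed as an operator on $\mathbb C^n\otimes\mathbb C^n$ with standard basis $|i\rangle\otimes|j\rangle$. *)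

(* Defs.v *)
From HB Require Import structures.
From mathcomp Require Import all_boot all_order all_algebra.
From mathcomp Require Import mpoly.
From mathcomp Require Export mxtens.
Set Implicit Arguments. Unset Strict Implicit. Unset Printing Implicit Defensive.
Import Order.TTheory GRing.Theory Num.Theory.
Local Open Scope ring_scope.

Section Fock.
Variables (C : numClosedFieldType) (n : nat).

(* Bosonic Fock space of n modes (finite-particle vectors), in the
   Segal--Bargmann realisation: the vector sum_m c_m |m> (occupation-number
   basis |m>, m : 'X_{1..n}) is the polynomial sum_m c_m X^m / sqrt(m!). *)
Definition fock := {mpoly C[n]}.

(* a_i^dagger : multiplication by X_i ;  a_i : d/dX_i.
   Then a_i^dagger |m> = sqrt(m_i+1)|m+e_i>, a_i |m> = sqrt(m_i)|m-e_i>. *)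
Definition cre (i : 'I_n) (p : fock) : fock := 'X_i * p.
Definition ann (i : 'I_n) (p : fock) : fock := mderiv i p.

Definition ip (p q : fock) : C :=
  \sum_(m <- msupp p) Num.conj (p@_m) * q@_m * (\prod_(i < n) (m i)`!)%:R.

Definition vac : fock := 1.

(* |b^n> = prod_i (a_i^dagger)^b / sqrt(b!) |0>. *)
Definition bstate (b : nat) : fock :=
  (sqrtC ((b`! ^ n)%:R : C))^-1 *: \prod_(i < n) 'X_i ^+ b.

(* passive Gaussian unitary U_W: U unitary (its adjoint V = U^dagger is its
   inverse), U|0> = |0>, and U^dagger a_i U = sum_j W_ij a_j. *)
Definition passive_gaussian (W : 'M[C]_n) (U : fock -> fock) : Prop :=
  exists V : fock -> fock,
    [/\ (forall p q, ip p (U q) = ip (V p) q),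
        cancel U V, cancel V U,
        U vac = vac &
        forall (i : 'I_n) (p : fock), V (ann i (U p)) = \sum_(j < n) W i j *: ann j p].

Definition moment4 (psi : fock) (i j k l : 'I_n) : C :=
  ip psi (ann i (ann j (cre k (cre l psi)))).

(* sigma^(2) as an operator on C^n (x) C^n; row (i,j), column (k,l), with the
   standard basis |i> (x) |j> indexed as in mxtens (index i*n+j). *)
Definition sigma2 (psi : fock) : 'M[C]_(n * n) :=
  \matrix_(p, q) moment4 psi (mxtens_unindex p).1 (mxtens_unindex p).2
                             (mxtens_unindex q).1 (mxtens_unindex q).2.

Definition swapmx : 'M[C]_(n * n) :=
  \matrix_(p, q) (((mxtens_unindex p).1 == (mxtens_unindex q).2) &&
                  ((mxtens_unindex p).2 == (mxtens_unindex q).1))%:R.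

End Fock.

(* Main.v *)
Require Import Defs.
From HB Require Import structures.
From mathcomp Require Import all_boot all_order all_algebra.
From mathcomp Require Import spectral mpoly mxtens ring.
Import GRing.Theory Num.Theory.
Local Open Scope ring_scope.

Section Fock2.
Variables (C : numClosedFieldType) (n : nat).
Local Notation fock := (fock C n).
Local Notation ip := (@ip C n).
Local Notation ann := (@ann C n).
Local Notation cre := (@cre C n).

Definition fct (m : 'X_{1..n}) : C := (\prod_(i < n) (m i)`!)%:R.

Lemma ipE p q : ip p q = \sum_(m <- msupp p) (p@_m)^* * q@_m * fct m.
Proof. by []. Qed.

Lemma ip_seq (s : seq 'X_{1..n}) p q : uniq s -> {subset msupp p <= s} ->
  ip p q = \sum_(m <- s) (p@_m)^* * q@_m * fct m.
Proof.
move=> us sub; rewrite ipE [RHS](bigID (fun m => m \in msupp p)) /=.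
rewrite [X in _ = _ + X]big1 ?addr0; last first.
  move=> m hm; have /eqP -> : p@_m == 0 by rewrite mcoeff_eq0.
  by rewrite conjC0 !mul0r.
rewrite -[RHS]big_filter; apply: perm_big; apply: uniq_perm.
- exact: msupp_uniq.
- exact: filter_uniq.
by move=> m; rewrite mem_filter; case: (boolP (m \in msupp p)) => // /sub ->.
Qed.

Lemma ip_sym p q : ip p q = (ip q p)^*.
Proof.
set s := undup (msupp p ++ msupp q).
have us : uniq s by exact: undup_uniq.
rewrite (@ip_seq s) //; last by move=> m h; rewrite mem_undup mem_cat h.
rewrite (@ip_seq s q) //; last by move=> m h; rewrite mem_undup mem_cat h orbT.
rewrite rmorph_sum; apply: eq_bigr => m _.
by rewrite !rmorphM /= conjCK /fct conjC_nat; ring.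
Qed.

Lemma ip_addr p q1 q2 : ip p (q1 + q2) = ip p q1 + ip p q2.
Proof.
rewrite !ipE -big_split /=; apply: eq_bigr => m _; rewrite mcoeffD /=; ring. Qed.

Lemma ip_scaler p a q : ip p (a *: q) = a * ip p q.
Proof. by rewrite !ipE mulr_sumr; apply: eq_bigr => m _; rewrite mcoeffZ; ring. Qed.

Lemma ip_sumr p (I : Type) (r : seq I) (P : pred I) (F : I -> fock) :
  ip p (\sum_(i <- r | P i) F i) = \sum_(i <- r | P i) ip p (F i).
Proof.
rewrite !ipE exchange_big /=; apply: eq_bigr => m _.
by rewrite raddf_sum mulr_sumr mulr_suml; apply: eq_bigr => i _.
Qed.

Lemma ip_scalel p a q : ip (a *: p) q = a^* * ip p q.
Proof. by rewrite ip_sym ip_scaler rmorphM /= [ip p q]ip_sym. Qed.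

Lemma ip_suml q (I : Type) (r : seq I) (P : pred I) (F : I -> fock) :
  ip (\sum_(i <- r | P i) F i) q = \sum_(i <- r | P i) ip (F i) q.
Proof. by rewrite ip_sym ip_sumr rmorph_sum; apply: eq_bigr => i _; rewrite [ip (F i) q]ip_sym. Qed.


Lemma fctU m i : fct (m + U_(i))%MM = (m i).+1%:R * fct m.
Proof.
rewrite /fct -natrM; congr (_%:R).
rewrite (bigD1 i) //= [in RHS](bigD1 i) //= mnmDE mnm1E eqxx addn1 factS mulnA.
congr (_ * _)%N; rewrite (eq_bigr (fun j => (m j)`!)) // => j /negbTE ji.
by rewrite mnmDE mnm1E eq_sym ji addn0.
Qed.

Lemma ipX m q : ip 'X_[m] q = q@_m * fct m.
Proof. by rewrite ipE msuppX big_seq1 mcoeffX eqxx conjC1 mul1r. Qed.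

Lemma ip_ann p i q : ip p (ann i q) = ip (cre i p) q.
Proof.
rewrite ipE [RHS]ipE /cre mulrC (perm_big _ (msuppMX p U_(i))) /= big_map.
apply: eq_bigr => m _; rewrite mcoeffMX /ann mcoeff_deriv [(U_(i) + _)%MM]addmC fctU.
rewrite -mulr_natr; ring.
Qed.

Lemma ip_cre p i q : ip p (cre i q) = ip (ann i p) q.
Proof. by rewrite ip_sym -ip_ann -ip_sym. Qed.

Lemma ann_cre i k p : ann i (cre k p) = (i == k)%:R *: p + cre k (ann i p).
Proof.
rewrite /ann /cre mderivM mderivX mnm1E eq_sym; congr (_ + _).
case: eqP => [->|_]; last by rewrite !scale0r mul0r.
have -> : (U_(k) - U_(k))%MM = 0%MM by apply/mnmP=> j; rewrite !mnmE subnn.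
by rewrite mpolyX0 -scalerAl mul1r.
Qed.


Lemma ann_comm i j p : ann i (ann j p) = ann j (ann i p).
Proof. exact: mderiv_comm. Qed.

Lemma annZ i a p : ann i (a *: p) = a *: ann i p.
Proof. exact: mderivZ. Qed.

Lemma ann_sum i (I : Type) (r : seq I) (P : pred I) (F : I -> fock) :
  ann i (\sum_(j <- r | P j) F j) = \sum_(j <- r | P j) ann i (F j).
Proof. exact: raddf_sum. Qed.

Lemma N_ann t r x l : cre t (ann t x) = l *: x ->
  cre t (ann t (ann r x)) = (l - (r == t)%:R) *: ann r x.
Proof.
move=> H; have := ann_cre r t (ann t x); rewrite H annZ ann_comm.
move=> E; rewrite scalerBl E.
case: eqP => [->|_]; last by rewrite !scale0r add0r subr0.
by rewrite [_ + cre _ _]addrC addrK.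
Qed.

Lemma ip_orth t x y l m : cre t (ann t x) = l *: x -> cre t (ann t y) = m *: y ->
  l^* = l -> l != m -> ip x y = 0.
Proof.
move=> Hx Hy Hl lm.
have E : ip x (cre t (ann t y)) = ip (cre t (ann t x)) y by rewrite ip_cre ip_ann.
move: E; rewrite Hx Hy ip_scaler ip_scalel Hl => /eqP.
rewrite -subr_eq0 -mulrBl mulf_eq0 subr_eq0 eq_sym (negbTE lm) /=.
by move/eqP.
Qed.


Section Bstate.
Variable b : nat.
Definition mb : 'X_{1..n} := [multinom b | i < n].
Definition cb : C := (sqrtC ((b`! ^ n)%:R : C))^-1.

Lemma bstateE : bstate C n b = cb *: 'X_[mb].
Proof.
rewrite /bstate mpolyXE_id; congr (_ *: _); apply: eq_bigr => i _.
by rewrite mnmE.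
Qed.

Lemma Nb t : cre t (ann t (bstate C n b)) = b%:R *: bstate C n b.
Proof.
rewrite bstateE annZ /cre /ann mderivX mnmE -scalerAr -scalerAr scalerA.
rewrite [in RHS]scalerA [in RHS]mulrC.
case: (posnP b) => [->|bp]; first by rewrite mulr0 !scale0r.
congr (_ *: _); rewrite -mpolyXD addmC submK //.
by apply/mnm_lepP => j; rewrite !mnmE; case: (t == j).
Qed.

Lemma fct_mb : fct mb = (b`! ^ n)%:R.
Proof.
rewrite /fct natr_prod (eq_bigr (fun=> (b`!)%:R)) => [|i _]; last by rewrite mnmE.
by rewrite prodr_const card_ord natrX.
Qed.

Lemma ipbb : ip (bstate C n b) (bstate C n b) = 1.
Proof.
rewrite bstateE ip_scalel ip_scaler ipX mcoeffX eqxx mul1r fct_mb /cb.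
set x : C := (b`! ^ n)%:R.
have x0 : 0 <= x by rewrite /x ler0n.
have xn0 : x != 0 by rewrite /x pnatr_eq0 -lt0n expn_gt0 fact_gt0.
rewrite geC0_conj; last by rewrite invr_ge0 sqrtC_ge0.
by rewrite mulrA -expr2 exprVn sqrtCK mulVf.
Qed.


Local Notation phi := (bstate C n b).

Lemma N1 t s : cre t (ann t (ann s phi)) = (b%:R - (s==t)%:R) *: ann s phi.
Proof. exact/N_ann/Nb. Qed.

Lemma N2 t r s : cre t (ann t (ann r (ann s phi))) =
   (b%:R - ((s==t) + (r==t))%:R) *: ann r (ann s phi).
Proof. by rewrite (@N_ann t r _ _ (N1 t s)) natrD opprD addrA. Qed.

Lemma real_nat_diff (x y : nat) : (x%:R - y%:R : C)^* = x%:R - y%:R.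
Proof. by rewrite rmorphB /= !conjC_nat. Qed.

Lemma neq_diff (x y z : nat) : y != z -> (x%:R - y%:R : C) != x%:R - z%:R.
Proof. by move=> yz; rewrite (can_eq (addKr _)) eqr_opp eqr_nat. Qed.

Lemma F1 s p : ip (ann s phi) (ann p phi) = b%:R * (s == p)%:R.
Proof.
case: eqP => [->|sp].
  by rewrite ip_ann Nb ip_scalel ipbb conjC_nat !mulr1.
rewrite mulr0; apply: (@ip_orth s _ _ (b%:R - 1%:R) (b%:R - 0%:R)).
- by rewrite N1 eqxx.
- by rewrite N1; case: eqP => // ps; case: sp.
- exact: real_nat_diff.
- exact: neq_diff.
Qed.

Lemma F2_orth t r s q p : ((s==t) + (r==t) != (p==t) + (q==t))%N ->
  ip (ann r (ann s phi)) (ann q (ann p phi)) = 0.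
Proof.
move=> H; apply: (@ip_orth t _ _ _ _ (N2 t r s) (N2 t q p)).
- exact: real_nat_diff.
- exact: neq_diff.
Qed.

Lemma F2_diag r s : ip (ann r (ann s phi)) (ann r (ann s phi)) =
  (b%:R - (s == r)%:R) * b%:R.
Proof.
rewrite ip_ann (N1 r s) ip_scalel real_nat_diff ip_ann Nb ip_scalel ipbb.
by rewrite conjC_nat mulr1.
Qed.

Definition F2v (r s q p : 'I_n) : C :=
  b%:R ^+ 2 * (((r == q) && (s == p))%:R + ((r == p) && (s == q))%:R)
  - b%:R * (b.+1)%:R * [&& r == s, s == q & q == p]%:R.

Lemma F2E r s q p : ip (ann r (ann s phi)) (ann q (ann p phi)) = F2v r s q p.
Proof.
rewrite /F2v.
have [rq|rq] := eqVneq r q.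
  subst q; have [sp|sp] := eqVneq s p.
    subst p; rewrite F2_diag ?eqxx /=.
    have [rs|rs] := eqVneq r s.
      by subst s; rewrite ?eqxx /= -natr1; ring.
    by rewrite /= ?mulr0n ?mulr1n; ring.
  rewrite (@F2_orth s); last first.
    by rewrite eqxx (eq_sym p s) (negbTE sp); case: (r == s).
  rewrite ?eqxx /=.
  have [rp|rp] := eqVneq r p; last by rewrite /= ?andbF ?mulr0n ?mulr1n; ring.
  subst p; rewrite (negbTE sp) [r == s]eq_sym (negbTE sp) /= ?andbF ?mulr0n ?mulr1n; ring.
have [rp|rp] := eqVneq r p.
  subst p; have [sq|sq] := eqVneq s q.
    subst q; rewrite [ann s (ann r _)]ann_comm F2_diag.
    rewrite eq_sym (negbTE rq) /= ?andbF ?mulr0n ?mulr1n; ring.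
  rewrite (@F2_orth s); last first.
    by rewrite eqxx (eq_sym q s) (negbTE sq) addn0; case: (r == s).
  by rewrite /= ?andbF ?mulr0n ?mulr1n; ring.
rewrite (@F2_orth r); last by rewrite eqxx (eq_sym p r) (negbTE rp) (eq_sym q r) (negbTE rq) addn1.
have -> : [&& r == s, s == q & q == p] = false.
  by apply/and3P => [[/eqP rs /eqP sq _]]; move: rq; rewrite rs sq eqxx.
by rewrite /= ?andbF ?mulr0n ?mulr1n; ring.
Qed.


Lemma sum_delta (F : 'I_n -> C) x : \sum_(p < n) F p * (x == p)%:R = F x.
Proof.
rewrite (bigD1 x) //= eqxx mulr1 big1 ?addr0 // => p px.
by rewrite eq_sym (negbTE px) mulr0.
Qed.

Lemma sum_delta' (F : 'I_n -> C) x : \sum_(p < n) (x == p)%:R * F p = F x.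
Proof. by rewrite -[RHS](sum_delta F x); apply: eq_bigr => p _; rewrite mulrC. Qed.

Lemma ip_double (a c : 'I_n -> 'I_n -> C) :
  ip (\sum_(q < n) \sum_(p < n) a q p *: ann q (ann p phi))
     (\sum_(q < n) \sum_(p < n) c q p *: ann q (ann p phi)) =
  \sum_(q' < n) \sum_(p' < n) (a q' p')^* *
     \sum_(q < n) \sum_(p < n) (c q p * F2v q' p' q p).
Proof.
rewrite ip_suml; apply: eq_bigr => q' _; rewrite ip_suml; apply: eq_bigr => p' _.
rewrite ip_scalel ip_sumr; congr (_ * _); apply: eq_bigr => q _.
rewrite ip_sumr; apply: eq_bigr => p _.
by rewrite ip_scaler F2E.
Qed.

Lemma inner_sum (c : 'I_n -> 'I_n -> C) q' p' :
  \sum_(q < n) \sum_(p < n) (c q p * F2v q' p' q p) =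
  b%:R ^+ 2 * c q' p' + b%:R ^+ 2 * c p' q'
  - b%:R * b.+1%:R * ((q' == p')%:R * c p' p').
Proof.
transitivity (\sum_(q < n) (b%:R ^+ 2 * ((q' == q)%:R * c q p')
   + b%:R ^+ 2 * ((p' == q)%:R * c q q')
   - b%:R * b.+1%:R * ((q' == p')%:R * ((p' == q)%:R * c q q)))).
  apply: eq_bigr => q _.
  rewrite (eq_bigr (fun p => b%:R ^+ 2 * (q' == q)%:R * (c q p * (p' == p)%:R)
     + b%:R ^+ 2 * (p' == q)%:R * (c q p * (q' == p)%:R)
     - b%:R * b.+1%:R * (q' == p')%:R * (p' == q)%:R * (c q p * (q == p)%:R))).
    by rewrite sumrB big_split /= -!mulr_sumr !sum_delta; ring.
  move=> p _; rewrite /F2v -!mulnb !natrM; ring.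
rewrite sumrB big_split /= -!mulr_sumr !sum_delta'.
congr (_ - _); congr (_ * _); rewrite -mulr_sumr sum_delta'.
Qed.

End Bstate.


Lemma creD k p q : cre k (p + q) = cre k p + cre k q.
Proof. exact: mulrDr. Qed.

Lemma creZ k a p : cre k (a *: p) = a *: cre k p.
Proof. by rewrite /cre scalerAr. Qed.

Lemma annD i p q : ann i (p + q) = ann i p + ann i q.
Proof. exact: mderivD. Qed.

Lemma moment_expand psi i j k l : moment4 psi i j k l =
  ip (ann l (ann k psi)) (ann i (ann j psi))
  + (i == l)%:R * ip (ann k psi) (ann j psi)
  + (i == k)%:R * ip (ann l psi) (ann j psi)
  + (j == l)%:R * ip (ann k psi) (ann i psi)
  + (j == k)%:R * ip (ann l psi) (ann i psi)
  + ((j == k)%:R * (i == l)%:R + (i == k)%:R * (j == l)%:R) * ip psi psi.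
Proof.
rewrite /moment4 !(ann_cre, creD, creZ, annD, annZ).
rewrite !(ip_addr, ip_scaler) !ip_cre.
ring.
Qed.


Section Unitary.
Variables (W : 'M[C]_n) (U V : fock -> fock) (b : nat).
Hypotheses (HUV : forall p q, ip p (U q) = ip (V p) q) (VK : cancel U V)
  (UK : cancel V U)
  (HA : forall (i : 'I_n) (p : fock), V (ann i (U p)) = \sum_(j < n) W i j *: ann j p)
  (Wu : forall x y, \sum_(r < n) W x r * (W y r)^* = (x == y)%:R).

Local Notation phi := (bstate C n b).

Lemma ipUU x y : ip (U x) (U y) = ip x y.
Proof. by rewrite HUV VK. Qed.

Lemma annU i p : ann i (U p) = U (\sum_(j < n) W i j *: ann j p).
Proof. by rewrite -HA UK. Qed.

Lemma annU2 i j : ann i (ann j (U phi)) =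
  U (\sum_(q < n) \sum_(p < n) (W i q * W j p) *: ann q (ann p phi)).
Proof.
rewrite annU annU; congr U; apply: eq_bigr => q _.
rewrite ann_sum scaler_sumr; apply: eq_bigr => p _.
by rewrite annZ scalerA.
Qed.

Lemma G1 k j : ip (ann k (U phi)) (ann j (U phi)) = b%:R * (j == k)%:R.
Proof.
rewrite !annU ipUU ip_suml.
rewrite (eq_bigr (fun s => (W k s)^* * (b%:R * W j s))); last first.
  move=> s _; rewrite ip_scalel ip_sumr; congr (_ * _).
  rewrite (eq_bigr (fun p => W j p * (b%:R * (s == p)%:R))).
    by rewrite (eq_bigr (fun p => (b%:R * W j p) * (s == p)%:R)) ?sum_delta // => p _; ring.
  by move=> p _; rewrite ip_scaler (F1 b).
by rewrite -Wu mulr_sumr; apply: eq_bigr => r _; ring.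
Qed.

Lemma sum4 (F G H : 'I_n -> 'I_n -> C) :
  \sum_(q < n) \sum_(p < n) (F q p + G q p - H q p) =
  \sum_(q < n) \sum_(p < n) F q p + \sum_(q < n) \sum_(p < n) G q p
  - \sum_(q < n) \sum_(p < n) H q p.
Proof.
rewrite -big_split -sumrB /=; apply: eq_bigr => q _.
by rewrite -big_split -sumrB.
Qed.

Lemma G2 i j k l : ip (ann l (ann k (U phi))) (ann i (ann j (U phi))) =
  b%:R ^+ 2 * ((i == l)%:R * (j == k)%:R + (i == k)%:R * (j == l)%:R)
  - b%:R * b.+1%:R * \sum_(r < n) W i r * W j r * (W k r)^* * (W l r)^*.
Proof.
rewrite !annU2 ipUU ip_double.
under eq_bigr => q' _ do under eq_bigr => p' _ do rewrite inner_sum.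
rewrite (eq_bigr (fun q' => \sum_(p' < n) (
   b%:R ^+ 2 * ((W i q' * (W l q')^*) * (W j p' * (W k p')^*))
 + b%:R ^+ 2 * ((W i p' * (W k p')^*) * (W j q' * (W l q')^*))
 - b%:R * b.+1%:R * ((q' == p')%:R * (W i p' * W j p' * (W k p')^* * (W l q')^*)))));
  last first.
  move=> q' _; apply: eq_bigr => p' _; rewrite rmorphM /=; ring.
rewrite sum4 mulrDr; congr (_ + _ - _).
- under eq_bigr => q _ do rewrite -mulr_sumr.
  by rewrite -mulr_sumr -big_distrlr /= !Wu.
- under eq_bigr => q _ do under eq_bigr => p _ do rewrite [_ * (W j q * _)]mulrC.
  under eq_bigr => q _ do rewrite -mulr_sumr.
  by rewrite -mulr_sumr -big_distrlr /= !Wu; congr (_ * _); rewrite mulrC.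
- under eq_bigr => q _ do rewrite -mulr_sumr.
  rewrite -mulr_sumr exchange_big /=; congr (_ * _); apply: eq_bigr => p _.
  under eq_bigr => q _ do rewrite eq_sym.
  by rewrite sum_delta'.
Qed.


Lemma moment_main i j k l : moment4 (U phi) i j k l =
  b.+1%:R ^+ 2 * ((i == k)%:R * (j == l)%:R + (i == l)%:R * (j == k)%:R)
  - b%:R * b.+1%:R * \sum_(r < n) W i r * W j r * (W k r)^* * (W l r)^*.
Proof.
rewrite moment_expand G2 !G1 ipUU ipbb -natr1.

ring.
Qed.

End Unitary.

End Fock2.

Local Open Scope sesquilinear_scope.

Theorem mainTheorem3 (C : numClosedFieldType) (n b : nat) (W : 'M[C]_n)
    (U : fock C n -> fock C n) :
  W \is unitarymx -> passive_gaussian W U ->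
  let sigma := sigma2 (U (bstate C n b)) in
  let IS : 'M[C]_(n * n) := (1%:M : 'M[C]_n) *t (1%:M : 'M[C]_n) + swapmx C n in
  let P : 'M[C]_(n * n) :=
    \sum_(i < n) (col i W *t col i W) *m (col i W *t col i W) ^t* in
  sigma = (b.+1 ^ 2)%:R *: IS - (b * b.+1)%:R *: P /\
  ((0 < b)%N ->
    let A := ((b * b.+1)%:R)^-1 *: ((b.+1 ^ 2)%:R *: IS - sigma) in
    [/\ A = P, A *m A = A, A ^t* = A & \rank A = n]).
Proof.
move=> Wun [V [HUV VK UK _ HA]] sigma IS P.
have WW : W *m W^t* = 1%:M by apply/unitarymxP.
have Wu : forall x y, \sum_(r < n) W x r * (W y r)^* = (x == y)%:R.
  move=> x y; have := congr1 (fun M : 'M[C]_n => M x y) WW; rewrite !mxE => <-.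
  by apply: eq_bigr => r _; rewrite !mxE.
have WtW : W^t* *m W = 1%:M by apply: mulmx1C.
have Wc : forall r s, \sum_(i < n) (W i r)^* * W i s = (r == s)%:R.
  move=> r s; have := congr1 (fun M : 'M[C]_n => M r s) WtW; rewrite !mxE => <-.
  by apply: eq_bigr => i _; rewrite !mxE.
have Pent : forall i j k l, P (mxtens_index (i, j)) (mxtens_index (k, l)) =
    \sum_(r < n) W i r * W j r * (W k r)^* * (W l r)^*.
  move=> i j k l; rewrite /P summxE; apply: eq_bigr => r _.
  rewrite mxE (eq_bigr (fun=> W i r * W j r * (W k r)^* * (W l r)^*)).
    by rewrite sumr_const card_ord.
  by move=> x _; rewrite !mxE !mxtens_indexK rmorphM /=; ring.
have S1 : sigma = (b.+1 ^ 2)%:R *: IS - (b * b.+1)%:R *: P.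
  apply/matrixP => p q; case: (mxtens_indexP p) => i j; case: (mxtens_indexP q) => k l.
  rewrite /sigma /sigma2 mxE !mxtens_indexK /=.
  rewrite (@moment_main C n W U V b HUV VK UK HA Wu).
  rewrite /IS !mxE !mxtens_indexK /= Pent -mulnb !natrM ?natrX; ring.
split => //.
move=> b0 A.
have KP : A = P.
  rewrite /A S1 opprB addrC subrK scalerA mulVf ?scale1r //.
  by rewrite pnatr_eq0 muln_eq0 negb_or -!lt0n b0.
pose M : 'M[C]_(n * n, n) :=
  \matrix_(p, r) (W (mxtens_unindex p).1 r * W (mxtens_unindex p).2 r).
have PM : P = M *m M^t*.
  apply/matrixP => p q; case: (mxtens_indexP p) => i j; case: (mxtens_indexP q) => k l.
  rewrite Pent !mxE; apply: eq_bigr => r _; rewrite !mxE !mxtens_indexK rmorphM /=; ring.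
have MM : M^t* *m M = 1%:M.
  apply/matrixP => r s; rewrite !mxE.
  transitivity ((\sum_(i < n) (W i r)^* * W i s) * (\sum_(j < n) (W j r)^* * W j s)).
    rewrite mulr_sum; apply: eq_bigr => p _; rewrite !mxE rmorphM /=; ring.
  by rewrite !Wc -natrM mulnb andbb.
rewrite KP PM; split => //.
- by rewrite mulmxA -[M *m M^t* *m M]mulmxA MM mulmx1.
- by rewrite trmx_mul map_mxM trmxCK.
- apply/eqP; rewrite eqn_leq; apply/andP; split.
    exact: leq_trans (mxrankM_maxl _ _) (rank_leq_col _).
  have E : (1%:M : 'M[C]_n) = M^t* *m (M *m M^t*) *m M.
    by rewrite mulmxA MM mul1mx MM.
  rewrite -{1}(mxrank1 C n) E.
  exact: leq_trans (mxrankM_maxl _ _) (mxrankM_maxr _ _).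
Qed.
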